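(* Let $G$ be a finite group and $p$ a prime divisor of $|G|$. Suppose that $\mathrm{pr}^*_G(p,p')>\frac{p+q-1}{pq}$, where $q$ is the smallest prime in $\pi(G)\setminus\{p\}$. Then $G=O_p(G)\times O_{p'}(G)$.
   Context: For subsets $X,Y$ of a finite group $G$, $\Pr(X,Y)=|\{(x,y)\in X\times Y: xy=yx\}|/(|X||Y|)$. For sets of primes $\pi_1,\pi_2$, $\mathrm{pr}^*_G(\pi_1,\pi_2)$ denotes the maximum real number $\epsilon$ such that for every pair of distinct primes $r\in\pi_1$, $s\in\pi_2$ there exist a Sylow $r$-subgroup $R$ and a Sylow $s$-subgroup $S$ of $G$ with $\Pr(R,S)\ge\epsilon$ (the Sylow subgroup for a prime not dividing $|G|$ is trivial); $\mathrm{pr}^*_G(p,\pi_2)=\mathrm{pr}^*_G(\{p\},\pi_2)$. $p'$ denotes the set of primes different from $p$. $\pi(G)$ is the set of prime divisors of $|G|$. *)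

(* Defs.v *)
From mathcomp Require Import all_boot all_order all_algebra all_fingroup all_solvable.
Set Implicit Arguments. Unset Strict Implicit. Unset Printing Implicit Defensive.
Import Order.TTheory GRing.Theory Num.Theory.

Local Open Scope group_scope.

Definition commProb (gT : finGroupType) (X Y : {set gT}) : rat :=
  (#|[set xy in setX X Y | ((xy.1 * xy.2)%g == (xy.2 * xy.1)%g)]|%:R
    / (#|X| * #|Y|)%N%:R)%R.

(* pr*_G(pi1,pi2): the largest eps such that for all distinct primes r in pi1,
   s in pi2 there are Sylow r- and s-subgroups R, S with Pr(R,S) >= eps.
   It equals the minimum, over such pairs (r,s), of the maximum of Pr(R,S)
   over Sylow pairs.  Pairs with r or s not dividing |G| involve a trivial
   Sylow subgroup, hence contribute Pr = 1; since Pr <= 1 they can be omitted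
   from the minimum, which starts at 1. *)
Definition prstar (gT : finGroupType) (G : {group gT}) (pi1 pi2 : pred nat) : rat :=
  \big[Order.min/1%R]_(r <- primes #|G| | r \in pi1)
   \big[Order.min/1%R]_(s <- primes #|G| | (s \in pi2) && (s != r))
    \big[Order.max/0%R]_(R in 'Syl_r(G))
     \big[Order.max/0%R]_(S in 'Syl_s(G)) commProb R S.

(* Main.v *)
Require Import Defs.
From mathcomp Require Import all_boot all_order all_algebra all_fingroup all_solvable.
From mathcomp Require Import zify ring.
Set Implicit Arguments. Unset Strict Implicit. Unset Printing Implicit Defensive.
Import Order.TTheory GRing.Theory Num.Theory.
Local Open Scope group_scope.


Lemma idx_bound (gT : finGroupType) (S H : {group gT}) s :
  prime s -> s.-group S -> H \subset S -> ~~ (S \subset H) -> (#|H| * s <= #|S|)%N.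
Proof.
move=> prs sS sHS nSH.
rewrite -(Lagrange sHS) leq_mul2l; apply/orP; right.
have n1 : 1 < #|S : H|.
  by rewrite ltn_neqAle eq_sym indexg_eq1 nSH indexg_gt0.
have nat : s.-nat #|S : H| := pnat_dvd (dvdn_indexg S H) sS.
have := pnatPpi nat (etrans (pi_pdiv _) n1); rewrite inE => /eqP ps.
by apply: dvdn_leq; [apply: ltnW | rewrite -ps pdiv_dvd].
Qed.

Lemma countN (gT : finGroupType) (R S : {group gT}) :
  #|[set xy in setX R S | ((xy.1 * xy.2)%g == (xy.2 * xy.1)%g)]|
  = \sum_(x in R) #|'C_S[x]|.
Proof.
rewrite -sum1_card.
transitivity (\sum_(x in R) \sum_(y | (y \in S) && ((x*y)%g == (y*x)%g)) 1%N); last first.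
  apply: eq_bigr => x xR; rewrite -sum1_card; apply: eq_bigl => y.
  by rewrite in_setI cent1E eq_sym.
rewrite pair_big_dep; apply: eq_bigl => -[x y].
by rewrite !inE /= andbA.
Qed.

Lemma sumID_bound (gT : finGroupType) (R S : {group gT}) s :
  (\sum_(x in R) (if x \in 'C(S) then #|S| * s else #|S|)
  = #|R :&: 'C(S)| * (#|S| * s) + #|R :\: 'C(S)| * #|S|)%N.
Proof.
rewrite (bigID (mem 'C(S))) /=.
rewrite (eq_bigr (fun _ => #|S| * s)%N); last by move=> x /andP[_ ->].
rewrite [X in _ + X](eq_bigr (fun _ => #|S|)); last by move=> x /andP[_ /negbTE ->].
rewrite (eq_bigl (mem (R :&: 'C(S)))); last by move=> x; rewrite !inE.
rewrite [X in _ + X](eq_bigl (mem (R :\: 'C(S)))); last by move=> x; rewrite !inE andbC.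
by rewrite !sum_nat_const.
Qed.

Lemma count_bound (gT : finGroupType) (R S : {group gT}) p s q :
  prime p -> prime s -> p.-group R -> s.-group S -> 0 < q <= s ->
  ~~ (R \subset 'C(S)) ->
  (#|[set xy in setX R S | ((xy.1 * xy.2)%g == (xy.2 * xy.1)%g)]| * (p * q)
  <= (p + q - 1) * (#|R| * #|S|))%N.
Proof.
move=> prp prs pR sS /andP[q0 qs] nRS.
rewrite countN.
have hx : forall x, x \in R ->
   (#|'C_S[x]| * s <= (if x \in 'C(S) then #|S| * s else #|S|))%N.
  move=> x xR; case: ifP => cx.
    by rewrite leq_mul2r subset_leq_card ?orbT // subsetIl.
  apply: idx_bound => //; first by rewrite subsetIl.
  by rewrite subsetI subxx /= sub_cent1 cx.
have hsum := leq_sum (index_enum gT) hx.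
rewrite -big_distrl /= sumID_bound in hsum.
have hA : (#|'C_R(S)| * p <= #|R|)%N.
  apply: idx_bound => //; first by rewrite subsetIl.
  by rewrite subsetI subxx.
have hD := cardsID 'C(S) R.
set N := \sum_(x in R) _ in hsum *.
set A := #|R :&: 'C(S)| in hsum hD.
rewrite -/A in hA.
set D := #|R :\: 'C(S)| in hsum hD.
have p1 : 1 < p by apply: prime_gt1.
have s1 : 1 < s by apply: prime_gt1.
clearbody N A D.
Local Open Scope nat_scope.
 move: hsum hA hD; rewrite -/A.
move: #|R| #|S| => r z hsum hA hD.
have h1 : N * s * p <= z * r * (p + s - 1).
  have e : A * (z * s) + D * z = z * (A * s + D) by ring.
  rewrite e in hsum.
  have h1a : N * s * p <= z * (A * s + D) * p by rewrite leq_mul2r hsum orbT.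
  apply: leq_trans h1a _.
  rewrite -!mulnA leq_mul2l; apply/orP; right.
  have hm := leq_mul hA (leqnn (s - 1)).
  rewrite -hD in hm *.
  nia.
have h2 : (p + s - 1) * q <= (p + q - 1) * s by nia.
have h3 : N * (p * q) * s <= (p + q - 1) * (r * z) * s.
  have e1 : N * (p * q) * s = (N * s * p) * q by ring.
  have e2 : (p + q - 1) * (r * z) * s = z * r * ((p + q - 1) * s) by ring.
  rewrite e1 e2; apply: leq_trans (leq_mul h1 (leqnn q)) _.
  have e3 : z * r * (p + s - 1) * q = z * r * ((p + s - 1) * q) by ring.
  by rewrite e3 leq_mul2l h2 orbT.
by rewrite leq_mul2r in h3; case/orP: h3 => // /eqP s0; rewrite s0 in s1.
Qed.
Lemma pnat_index_of_sylows (gT : finGroupType) (G C : {group gT}) p :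
  C \subset G ->
  (forall s, s \in primes #|G| -> s != p -> exists2 S : {group gT}, s.-Sylow(G) S & S \subset C) ->
  p.-nat #|G : C|.
Proof.
move=> sCG hS; apply/pnatP => // r pr_r rdiv.
rewrite inE; apply/negPn/negP => rp.
have rG : r \in primes #|G|.
  by rewrite mem_primes pr_r cardG_gt0 (dvdn_trans rdiv) // dvdn_indexg.
have [S sylS sSC] := hS r rG rp.
case/and3P: sylS => _ _; rewrite (p'natE _ pr_r) => /negP; apply.
by apply: dvdn_trans rdiv (indexgS G sSC).
Qed.

Lemma group_part (gT : finGroupType) (G P : {group gT}) p :
  p.-Sylow(G) P ->
  (forall s, s \in primes #|G| -> s != p -> exists2 S : {group gT}, s.-Sylow(G) S & S \subset 'C(P)) ->
  'O_p(G) \x 'O_p^'(G) = G.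
Proof.
move=> sylP hS.
have sPG := pHall_sub sylP.
have hS' : forall s, s \in primes #|G| -> s != p ->
    exists2 S : {group gT}, s.-Sylow(G) S & S \subset 'C_G(P).
  move=> s sG sp; have [S sylS sSC] := hS s sG sp; exists S => //.
  by rewrite subsetI (pHall_sub sylS).
have pC := pnat_index_of_sylows (subsetIl G _) hS'.
have sCN : 'C_G(P) \subset 'N_G(P) by rewrite setIS // cent_sub.
have pN : p.-nat #|G : 'N_G(P)| := pnat_dvd (indexgS G sCN) pC.
have sPN : P \subset 'N_G(P) by rewrite subsetI sPG normG.
have p'N : p^'.-nat #|G : 'N_G(P)|.
  by apply: pnat_dvd (indexgS G sPN) _; case/and3P: sylP.
have /eqP := pnat_1 pN p'N; rewrite indexg_eq1 => sGN.
have nPG : P <| G by rewrite /normal sPG (subset_trans sGN) // subsetIr.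
have OpP : 'O_p(G) = P := normal_Hall_pcore sylP nPG.
have [K cK] := splitsP (SchurZassenhaus_split (pHall_Hall sylP) nPG).
have defG : P ><| K = G by apply/(sdprod_normal_complP nPG); rewrite complgC.

have hallO : p.-Hall(G) 'O_p(G) by rewrite OpP.
have hallK : p^'.-Hall(G) K.
  by apply/(sdprod_Hall_pcoreP hallO); rewrite OpP.
have sKG := pHall_sub hallK.
have NG : 'N_G(P) = G by apply/setIidPl; case/andP: nPG.
have nCG : G \subset 'N('C_G(P)).
  by have := subcent_normal G P; rewrite NG => /andP[].
have pGC : p.-group (G / 'C_G(P)) by rewrite /pgroup card_quotient.
have pKC : p.-group (K / 'C_G(P)) := pgroupS (quotientS _ sKG) pGC.
have p'KC : p^'.-group (K / 'C_G(P)) := quotient_pgroup _ (pHall_pgroup hallK).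
have KC1 := card1_trivg (pnat_1 pKC p'KC).
have sKC : K \subset 'C_G(P).
  by rewrite -(quotient_sub1 (subset_trans sKG nCG)) KC1.
have cKP : K \subset 'C(P) := subset_trans sKC (subsetIr _ _).
have nKG : K <| G.
  rewrite /normal sKG -(sdprodW defG) mul_subG ?normG // cents_norm //.
  by rewrite centsC.
have OpK : 'O_p^'(G) = K := normal_Hall_pcore hallK nKG.
by rewrite OpP OpK dprodEsd.
Qed.

Lemma commProb_le (gT : finGroupType) (R S : {group gT}) p s q :
  prime p -> prime s -> p.-group R -> s.-group S -> 0 < q <= s ->
  ~~ (R \subset 'C(S)) ->
  (commProb R S <= (p + q - 1)%:R / (p * q)%:R)%R.
Proof.
move=> prp prs pR sS /andP[q0 qs] nRS.
rewrite /commProb ler_pdivrMr ?ltr0n ?muln_gt0 ?cardG_gt0 //.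
rewrite mulrAC ler_pdivlMr ?ltr0n ?muln_gt0 ?q0 ?(prime_gt0 prp) //.
rewrite -!natrM ler_nat.
by apply: count_bound prp prs pR sS _ nRS; rewrite q0 qs.
Qed.

Lemma bmin_le (I : eqType) (r : seq I) (P : pred I) (F : I -> rat) x0 i :
  i \in r -> P i -> (\big[Order.min/x0]_(j <- r | P j) F j <= F i)%R.
Proof.
elim: r => // a r IH; rewrite inE big_cons; case/orP => [/eqP<-|ir] Pi.
  by rewrite Pi ge_min lexx.
by case: (P a); rewrite ?ge_min IH ?orbT.
Qed.

Lemma bmax_gt (I : eqType) (r : seq I) (P : pred I) (F : I -> rat) x0 x :
  (x0 <= x)%R -> (x < \big[Order.max/x0]_(j <- r | P j) F j)%R ->
  exists2 i, P i & (x < F i)%R.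
Proof.
move=> hx0; elim: r => [|a r IH]; first by rewrite big_nil => h; move: (lt_le_trans h hx0); rewrite ltxx.
rewrite big_cons; case Pa: (P a); last exact: IH.
by rewrite lt_max => /orP[h|h]; [exists a | exact: IH].
Qed.

Theorem proposition3p2 (gT : finGroupType) (G : {group gT}) (p q : nat) :
  prime p -> p %| #|G| ->
  q \in primes #|G| -> q != p ->
  (forall r, r \in primes #|G| -> r != p -> q <= r) ->
  ((p + q - 1)%:R / (p * q)%:R < prstar G (pred1 p) (predC1 p))%R ->
  ('O_p(G) \x 'O_p^'(G))%g = G.
Proof.
move=> prp pG qG qp qmin hlt.
have prq : prime q by move: qG; rewrite mem_primes => /andP[].
have [P0 sylP0] := Sylow_exists p G.
apply: (group_part sylP0) => s sG sp.
have pG' : p \in primes #|G| by rewrite mem_primes prp cardG_gt0.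
rewrite /prstar in hlt.
have h1 := lt_le_trans hlt (bmin_le (P := fun r => r \in pred1 p) _ _ pG' (eqxx p)).
have sP : (s \in predC1 p) && (s != p) by rewrite inE sp.
have h2 := lt_le_trans h1 (bmin_le (P := fun s' => (s' \in predC1 p) && (s' != p)) _ _ sG sP).
have b0 : (0 <= (p + q - 1)%:R / (p * q)%:R :> rat)%R by rewrite divr_ge0 ?ler0n.
have [R sylR h3] := bmax_gt b0 h2.
have [S sylS h4] := bmax_gt b0 h3.
rewrite inE in sylR; rewrite inE in sylS.
have prs : prime s by move: sG; rewrite mem_primes => /andP[].
have cRS : R \subset 'C(S).
  apply/negPn/negP => nRS.
  have hq : 0 < q <= s by rewrite prime_gt0 // qmin.
  have hle := commProb_le prp prs (pHall_pgroup sylR) (pHall_pgroup sylS) hq nRS.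
  by move: (lt_le_trans h4 hle); rewrite ltxx.
have [x xG defP] := Sylow_trans sylR sylP0.
exists (S :^ x)%G; first by rewrite pHallJ.
by rewrite defP centJ conjSg centsC.
Qed.
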